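(* Let $R$ be a reference string ending with the end-of-string character $\#$, and let ${\cal C}$ be the concatenation of a collection of strings $S_1,\dots,S_m$, each terminated by an end-of-string character, with total length $N$. Let $1\le i,j\le N$. If $\textit{ip}(i)=\textit{ip}(j)$ and neither $i$ nor $j$ is an insert-head, then $\textit{suf}_i$ and $\textit{suf}_j$ are preceded by the same character $c=R[\textit{SA}_R[\textit{ip}(i)]-1]$, i.e. ${\cal C}[i-1]={\cal C}[j-1]=c=R[\textit{SA}_R[\textit{ip}(i)]-1]$.
   Context: Strings are indexed from 1; $T[i..j]$ is a substring, $\textit{suf}_i=T[i..]$. The character $\#$ is smaller than every other character, and smaller than the end-of-string characters of ${\cal C}$ (which are smaller than all other characters of ${\cal C}$). It is assumed every character of ${\cal C}$ occurs in $R$. $\textit{SA}_R$ is the suffix array of $R$: $\textit{SA}_R[k]$ is the starting position of the $k$-th smallest suffix of $R$ in lexicographic order. For a position $i$ of ${\cal C}$, the matching factor $U_i$ is the longest prefix of $\textit{suf}_i({\cal C})$ occurring as a substring of $R$, $\ell_i=|U_i|$, and $c_i={\cal C}[i+\ell_i]$ is the mismatch character. The insert point of $i$ is $\textit{ip}(i)=1$ if $U_i$ is empty; otherwise $\textit{ip}(i)=\max\{k : U_i \text{ is a prefix of } R[\textit{SA}_R[k]..] \text{ and } R[\textit{SA}_R[k]..]<U_ic_i\}$ if this set is nonempty, and $\textit{ip}(i)=\min\{k: U_i\text{ is a prefix of } R[\textit{SA}_R[k]..]\}$ otherwise. A position $j$ of ${\cal C}$ is an insert-head if $\textit{SA}_R[\textit{ip}(j)]\neq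 \textit{SA}_R[\textit{ip}(j-1)]+1$. *)

(* Defs.v *)
(* Characters are natural numbers (any finite totally
   ordered alphabet embeds order-preservingly into nat). *)
From mathcomp Require Import all_boot.
Set Implicit Arguments. Unset Strict Implicit. Unset Printing Implicit Defensive.

Fixpoint lexlt (s t : seq nat) : bool :=
  match s, t with
  | _, [::] => false
  | [::], _ :: _ => true
  | x :: s', y :: t' => (x < y) || ((x == y) && lexlt s' t')
  end.
Definition lexle (s t : seq nat) : bool := (s == t) || lexlt s t.

(* 1-based access: T[i] and suf_i = T[i..] *)
Definition ch (T : seq nat) (i : nat) : nat := nth 0 T i.-1.
Definition suf (T : seq nat) (i : nat) : seq nat := drop i.-1 T.

(* concatenation of the strings S_k, each followed by its terminator e_k *)
Definition concat_coll (Ss : seq (seq nat * nat)) : seq nat :=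
  flatten [seq rcons p.1 p.2 | p <- Ss].

(* suffix array of R (1-based, values in 1..|R|): SA R k is the starting
   position of the k-th smallest suffix of R *)
Definition SA_list (R : seq nat) : seq nat :=
  sort (fun p q => lexle (suf R p) (suf R q)) (iota 1 (size R)).
Definition SA (R : seq nat) (k : nat) : nat := nth 0 (SA_list R) k.-1.

Definition mlen (R C : seq nat) (i : nat) : nat :=
  \max_(l < (size (suf C i)).+1 | infix (take l (suf C i)) R) l.
Definition U (R C : seq nat) (i : nat) : seq nat := take (mlen R C i) (suf C i).
(* U_i c_i (if suf_i is entirely matched, this is just U_i) *)
Definition Uc (R C : seq nat) (i : nat) : seq nat := take (mlen R C i).+1 (suf C i).

Definition ip (R C : seq nat) (i : nat) : nat :=
  if mlen R C i == 0 then 1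
  else if [exists k : 'I_(size R).+1,
             [&& 1 <= k, prefix (U R C i) (suf R (SA R k))
                 & lexlt (suf R (SA R k)) (Uc R C i)]]
  then \max_(1 <= k < (size R).+1 | prefix (U R C i) (suf R (SA R k))
                                  && lexlt (suf R (SA R k)) (Uc R C i)) k
  else head 0 [seq k <- iota 1 (size R) | prefix (U R C i) (suf R (SA R k))].

(* insert-head; position 1 (which has no predecessor) is an insert-head by convention *)
Definition insert_head (R C : seq nat) (j : nat) : bool :=
  (j == 1) || (SA R (ip R C j) != (SA R (ip R C j.-1)).+1).

(* Main.v *)
Require Import Defs.
From mathcomp Require Import all_boot.

Lemma maxn_cases x y : maxn x y = x \/ maxn x y = y.
Proof. rewrite /maxn; case: ltnP; auto. Qed.

Lemma mlen_pos (R C : seq nat) p : (forall x, x \in C -> x \in R) -> 1 <= p <= size C ->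
  0 < mlen R C p.
Proof.
move=> hCR /andP [p1 pN]; rewrite /mlen.
set s := suf C p.
have hs : 0 < size s by rewrite /s /suf size_drop subn_gt0; move: p1 pN; clear; case: p => // p _ /=.
have h1 : 1 < (size s).+1 by [].
apply: (leq_trans _ (leq_bigmax_cond (Ordinal h1) _)) => //=.
case E: s hs => [|x s'] //= _.
rewrite take0 infix1s; apply: hCR.
have : x \in s by rewrite E mem_head.
by rewrite /s /suf => /mem_drop.
Qed.
Arguments mlen_pos {R C p}.

Lemma mlen_infix R C p : infix (U R C p) R.
Proof.
rewrite /U /mlen.
apply: (big_ind (fun m => infix (take m (suf C p)) R)).
- by rewrite take0 infix0s.
- by move=> x y hx hy; case: (maxn_cases x y) => ->.
- by move=> l.
Qed.

Lemma U_head (R C : seq nat) p : (forall x, x \in C -> x \in R) -> 1 <= p <= size C ->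
  exists t, U R C p = ch C p :: t.
Proof.
move=> hCR hp; have hm := mlen_pos hCR hp.
move: hp => /andP [p1 pN].
rewrite /U /ch /suf (drop_nth 0); last by move: p1 pN; clear; case: p.
case: (mlen R C p) hm => // m _ /=; eauto.
Qed.
Arguments U_head {R C p}.

Lemma prefix_ch R q x t : prefix (x :: t) (suf R q) -> ch R q = x.
Proof.
rewrite /ch /suf; case E: (drop q.-1 R) => [|y r] //=.
move=> /andP [/eqP -> _].
have : nth 0 (drop q.-1 R) 0 = y by rewrite E.
by rewrite nth_drop addn0.
Qed.

Lemma exists_k R u : infix u R -> u != [::] ->
  exists k, (k \in iota 1 (size R)) && prefix u (suf R (SA R k)).
Proof.
move=> /infixP [s1 [s2 ->]] hu.
set R' := s1 ++ u ++ s2.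
have hin : (size s1).+1 \in SA_list R'.
  rewrite /SA_list (perm_mem (permEl (perm_sort _ _))) mem_iota /R' !size_cat.
  by clear R'; case: u hu => //= ? ? _; rewrite addnS ltnS leq_addr.
exists (index (size s1).+1 (SA_list R')).+1.
rewrite /SA /= nth_index // mem_iota /= add1n ltnS.
have := hin; rewrite -index_mem /SA_list size_sort size_iota => -> /=.
by rewrite /suf /= drop_size_cat // prefix_prefix.
Qed.

Lemma ip_prefix (R C : seq nat) p : (forall x, x \in C -> x \in R) -> 1 <= p <= size C ->
  prefix (U R C p) (suf R (SA R (ip R C p))).
Proof.
move=> hCR hp; have hm := mlen_pos hCR hp.
have [t hU] := U_head hCR hp.
rewrite /ip; have -> : (mlen R C p == 0) = false by case: (mlen R C p) hm.
rewrite /=.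
case: ifP => [/existsP [k /and3P [k1 hpk hl]] | _].
- set P := fun k => prefix (U R C p) (suf R (SA R k)) && lexlt (suf R (SA R k)) (Uc R C p).
  have hk : k <= \max_(1 <= k < (size R).+1 | P k) k.
    apply: (leq_bigmax_seq (F := id) (P := P)); last by rewrite /P hpk hl.
    by rewrite mem_index_iota k1 ltn_ord.
  move: hk.
  apply: (big_ind (fun m => k <= m -> prefix (U R C p) (suf R (SA R m)))).
  + by rewrite leqNgt (leq_trans _ k1).
  + move=> x y hx hy; case: (maxn_cases x y) => ->; auto.
  + by move=> i /andP [].
- have [k /andP [hk hpk]] := exists_k _ _ (mlen_infix R C p) ltac:(by rewrite hU).
  set P := fun k => prefix (U R C p) (suf R (SA R k)).
  have : has P (iota 1 (size R)) by apply/hasP; exists k.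
  rewrite has_filter.
  case E: [seq k <- iota 1 (size R) | P k] => [|x r] //= _.
  have : x \in [seq k <- iota 1 (size R) | P k] by rewrite E mem_head.
  by rewrite mem_filter => /andP [].
Qed.
Arguments ip_prefix {R C p}.

Lemma key (R C : seq nat) p : (forall x, x \in C -> x \in R) -> 1 <= p <= size C ->
  ch R (SA R (ip R C p)) = ch C p.
Proof.
move=> hCR hp; have [t hU] := U_head hCR hp.
have := ip_prefix hCR hp; rewrite hU; exact: prefix_ch.
Qed.

Theorem lemma5 (R0 : seq nat) (hash : nat) (eos : pred nat)
    (Ss : seq (seq nat * nat)) (i j : nat) :
  (* R = R0 # , with # smaller than every other character *)
  (forall x, x \in R0 -> hash < x) ->
  (forall x, x \in concat_coll Ss -> hash < x) ->
  (* each S_k is terminated by an end-of-string character, which does not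
     occur inside the strings *)
  (forall p, p \in Ss -> eos p.2 /\ all (fun x => ~~ eos x) p.1) ->
  (* end-of-string characters of C are smaller than all other characters of C *)
  (forall e x, e \in concat_coll Ss -> x \in concat_coll Ss ->
     eos e -> ~~ eos x -> e < x) ->
  (* every character of C occurs in R *)
  (forall x, x \in concat_coll Ss -> x \in rcons R0 hash) ->
  let R := rcons R0 hash in
  let C := concat_coll Ss in
  let N := size C in
  1 <= i <= N -> 1 <= j <= N ->
  ip R C i = ip R C j ->
  ~~ insert_head R C i -> ~~ insert_head R C j ->
  ch C i.-1 = ch R (SA R (ip R C i)).-1 /\ ch C j.-1 = ch R (SA R (ip R C i)).-1.
Proof.
move=> _ _ _ _ hCR R C N hi hj hij hhi hhj.
have gen : forall q, 1 <= q <= N -> ~~ insert_head R C q ->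
    ch C q.-1 = ch R (SA R (ip R C q)).-1.
  move=> q /andP [q1 qN]; rewrite /insert_head negb_or => /andP [hq1].
  rewrite negbK => /eqP ->; rewrite /= key //.
  case: q q1 qN hq1 => [|[|q]] //= _ qN _.
  by rewrite /= ltnW.
split; first exact: gen.
by rewrite hij; exact: gen.
Qed.
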